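(* Let $\alpha\in(0,\pi/2]$ and let $I_1(\beta),I_2(\beta)$ be as defined in the context, for $\beta\in(\alpha,\pi)$. Then $(\cos\alpha-\cos\beta)^{1/2}I_1(\beta)$ is strictly decreasing and $(\cos\alpha-\cos\beta)^{1/2}I_2(\beta)$ is strictly increasing in $\beta$; $I_1>I_2$ for $\beta$ close to $\alpha$ and $I_1<I_2$ for $\beta$ close to $\pi$. Consequently there exists a unique $\beta^+\in(\alpha,\pi)$ with $I_1(\beta^+)=I_2(\beta^+)$.
   Context: For $\alpha\in(0,\pi/2]$ and $\beta\in(\alpha,\pi)$: $$I_1(\beta)=\int_0^\alpha\Big(\frac{\cos t-\cos\alpha}{\cos\alpha-\cos\beta}\Big)^{1/2}\frac{dt}{\cos t-\cos\beta},\qquad I_2(\beta)=\int_0^\alpha\Big(\frac{\cos\alpha-\cos\beta}{\cos t-\cos\alpha}\Big)^{1/2}\frac{dt}{\cos t-\cos\beta}.$$ *)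

(* Defs.v *)
From Stdlib Require Import Reals Lra.
Open Scope R_scope.

(* Improper Riemann integral at the right endpoint:
   f is Riemann integrable on [a,c] for every c in [a,b), and
   int_a^c f -> l as c -> b^-.  (Needed since the integrand of I_2 is
   unbounded near t = alpha.) *)
Definition improper_int_right (f : R -> R) (a b l : R) : Prop :=
  (forall c, a <= c < b -> exists _ : Riemann_integrable f a c, True) /\
  (forall eps, 0 < eps -> exists delta, 0 < delta /\
     forall c (pr : Riemann_integrable f a c),
       b - delta < c < b -> Rabs (RiemannInt pr - l) < eps).

Definition integrand1 (alpha beta t : R) : R :=
  sqrt ((cos t - cos alpha) / (cos alpha - cos beta)) / (cos t - cos beta).

Definition integrand2 (alpha beta t : R) : R :=
  sqrt ((cos alpha - cos beta) / (cos t - cos alpha)) / (cos t - cos beta).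

(* Main.v *)
Require Import Defs.
From Stdlib Require Import Reals Lra Lia Psatz Classical ClassicalEpsilon Ranalysis5.
Open Scope R_scope.

Lemma sin_half_lb u : 0 <= u <= 1 -> u / 2 <= sin u.
Proof.
  intros [H0 H1].
  assert (HP := PI2_1).
  destruct (SIN u H0 ltac:(lra)) as [Hl _].
  eapply Rle_trans; [|exact Hl].
  unfold sin_lb, sin_approx, sin_term; simpl.
  assert (u*u <= 1) by nra.
  assert (0 <= u*u) by nra.
  assert (u*u*(u*u) <= 1) by nra.
  assert (u*u*(u*u)*(u*u) <= 1) by nra.
  field_simplify. nra.
Qed.

Definition RI (f:R->R) (a b:R) : R :=
  match excluded_middle_informative (exists pr : Riemann_integrable f a b, True) with
  | left H => RiemannInt (proj1_sig (constructive_indefinite_description _ H))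
  | right _ => 0 end.

Lemma RI_eq f a b (pr : Riemann_integrable f a b) : RiemannInt pr = RI f a b.
Proof.
  unfold RI. destruct excluded_middle_informative as [H|H].
  - apply RiemannInt_P5.
  - exfalso; apply H; exists pr; exact I.
Qed.

Lemma RiemInt_ext f g a b : a <= b ->
  (forall t, a <= t <= b -> f t = g t) ->
  Riemann_integrable f a b -> Riemann_integrable g a b.
Proof.
  intros Hab Hfg pr eps. destruct (pr eps) as [phi [psi [H1 H2]]].
  exists phi, psi. split; [|exact H2].
  intros t Ht. rewrite <- Hfg. apply H1; exact Ht.
  rewrite Rmin_left in Ht by lra. rewrite Rmax_right in Ht by lra. lra.
Qed.

Lemma RI_ext f g a b : a <= b -> Riemann_integrable f a b ->
  (forall t, a <= t <= b -> f t = g t) -> RI f a b = RI g a b.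
Proof.
  intros Hab pr Hfg. pose proof (RiemInt_ext f g a b Hab Hfg pr) as pr'.
  rewrite <- (RI_eq _ _ _ pr), <- (RI_eq _ _ _ pr').
  apply RiemannInt_P18; auto. intros; apply Hfg; lra.
Qed.

Lemma RI_le f g a b : a <= b -> Riemann_integrable f a b -> Riemann_integrable g a b ->
  (forall t, a < t < b -> f t <= g t) -> RI f a b <= RI g a b.
Proof.
  intros Hab pr1 pr2 H. rewrite <- (RI_eq _ _ _ pr1), <- (RI_eq _ _ _ pr2).
  apply RiemannInt_P19; auto.
Qed.

Lemma RI_lin f g l a b : Riemann_integrable f a b -> Riemann_integrable g a b ->
  RI (fun x => f x + l * g x) a b = RI f a b + l * RI g a b.
Proof.
  intros pr1 pr2. pose proof (RiemannInt_P10 l pr1 pr2) as pr3.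
  rewrite <- (RI_eq _ _ _ pr1), <- (RI_eq _ _ _ pr2), <- (RI_eq _ _ _ pr3).
  apply RiemannInt_P13.
Qed.

Lemma int_lin f g l a b : Riemann_integrable f a b -> Riemann_integrable g a b ->
  Riemann_integrable (fun x => f x + l * g x) a b.
Proof. intros; apply RiemannInt_P10; auto. Qed.

Lemma int_const k a b : Riemann_integrable (fun _ => k) a b.
Proof. apply (RiemannInt_P14 a b k). Qed.

Lemma RI_const k a b : RI (fun _ => k) a b = k * (b - a).
Proof.
  rewrite <- (RI_eq _ _ _ (int_const k a b)). apply (RiemannInt_P15 (int_const k a b)).
Qed.

Lemma int_sub f a b c : Riemann_integrable f a b -> a <= c <= b -> Riemann_integrable f a c.
Proof. intros; eapply RiemannInt_P22; eauto. Qed.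

Lemma int_sub2 f a b c : Riemann_integrable f a b -> a <= c <= b -> Riemann_integrable f c b.
Proof. intros; eapply RiemannInt_P23; eauto. Qed.

Lemma RI_chasles f a b c : Riemann_integrable f a c -> a <= b <= c ->
  RI f a b + RI f b c = RI f a c.
Proof.
  intros pr H. pose proof (int_sub _ _ _ _ pr H) as p1.
  pose proof (int_sub2 _ _ _ _ pr H) as p2.
  rewrite <- (RI_eq _ _ _ p1), <- (RI_eq _ _ _ p2), <- (RI_eq _ _ _ pr).
  apply RiemannInt_P26.
Qed.

Lemma cont_int f a b : a <= b -> (forall x, a <= x <= b -> continuity_pt f x) ->
  Riemann_integrable f a b.
Proof. intros; apply continuity_implies_RiemannInt; auto. Qed.

Lemma RI_scal f l a b : Riemann_integrable f a b -> a <= b ->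
  RI (fun x => l * f x) a b = l * RI f a b.
Proof.
  intros pr Hab.
  rewrite <- (RI_ext (fun x => 0 + l * f x)); auto.
  - rewrite RI_lin; auto. rewrite RI_const. ring. apply int_const.
  - apply int_lin; auto. apply int_const.
  - intros; ring.
Qed.

Lemma int_scal f l a b : Riemann_integrable f a b -> a <= b ->
  Riemann_integrable (fun x => l * f x) a b.
Proof.
  intros pr Hab. apply (RiemInt_ext (fun x => 0 + l * f x)); auto.
  intros; ring. apply int_lin; auto; apply int_const.
Qed.

Lemma Rabs_le_inv a b : Rabs a <= b -> -b <= a <= b.
Proof. unfold Rabs; destruct Rcase_abs; lra. Qed.

Lemma RI_bound f M a b : a <= b -> Riemann_integrable f a b ->
  (forall t, a < t < b -> Rabs (f t) <= M) -> Rabs (RI f a b) <= M * (b - a).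
Proof.
  intros Hab pr H. apply Rabs_le. split.
  - replace (- (M * (b-a))) with (-M * (b-a)) by ring.
    rewrite <- RI_const. apply RI_le; auto. apply int_const.
    intros t Ht; specialize (H t Ht); apply Rabs_le_inv in H; lra.
  - rewrite <- RI_const. apply RI_le; auto. apply int_const.
    intros t Ht; specialize (H t Ht); apply Rabs_le_inv in H; lra.
Qed.

Lemma RI_FTC f F a b : a <= b ->
  (forall x, a <= x <= b -> derivable_pt_lim F x (f x)) ->
  (forall x, a <= x <= b -> continuity_pt f x) ->
  RI f a b = F b - F a.
Proof.
  intros Hab HF Hc.
  pose proof (cont_int f a b Hab Hc) as pr0.
  rewrite <- (RI_eq _ _ _ pr0).
  rewrite (RiemannInt_P20 Hab (FTC_P1 Hab Hc) pr0).
  set (P := primitive Hab (FTC_P1 Hab Hc)).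
  assert (HP : forall x, a <= x <= b -> derivable_pt_lim P x (f x)).
  { intros; apply RiemannInt_P28; auto. }
  set (G := fun x => P x - F x).
  assert (HG : forall x, a <= x <= b -> derivable_pt_lim G x 0).
  { intros x Hx. replace 0 with (f x - f x) by ring.
    apply derivable_pt_lim_minus; auto. }
  assert (pr : forall x, a < x < b -> derivable_pt G x).
  { intros x Hx. exists 0. apply HG; lra. }
  assert (Hcst := null_derivative_loc G a b pr).
  assert (Hb : G b = G a).
  { apply Hcst; [| |lra].
    - intros x Hx. apply derivable_continuous_pt. exists 0. apply HG; auto.
    - intros x Hx. apply derive_pt_eq_0. apply HG; lra. }
  unfold G in Hb. lra.
Qed.

Lemma Rabs_lt_inv a b : Rabs a < b -> -b < a < b.
Proof. unfold Rabs; destruct Rcase_abs; lra. Qed.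

Definition ImpL (al:R) (f:R->R) (L:R) : Prop :=
  (forall c, 0 <= c < al -> exists _ : Riemann_integrable f 0 c, True) /\
  (forall eps, 0 < eps -> exists delta, 0 < delta <= al /\
     forall c, al - delta < c < al -> Rabs (RI f 0 c - L) < eps).

Lemma ImpL_to al f L : ImpL al f L -> improper_int_right f 0 al L.
Proof.
  intros [H1 H2]. split; auto.
  intros eps Heps. destruct (H2 eps Heps) as [d [Hd Hc]].
  exists d. split; [lra|]. intros c pr Hcc. rewrite RI_eq. apply Hc; auto.
Qed.

Lemma RI_mono_nonneg f c0 c : Riemann_integrable f 0 c -> 0 <= c0 <= c ->
  (forall t, c0 < t < c -> 0 <= f t) -> RI f 0 c0 <= RI f 0 c.
Proof.
  intros pr Hc Hf. rewrite <- (RI_chasles f 0 c0 c pr Hc).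
  assert (0 <= RI f c0 c).
  { replace 0 with (RI (fun _ => 0) c0 c) by (rewrite RI_const; ring).
    apply RI_le; try lra. apply int_const. eapply int_sub2; eauto. auto. }
  lra.
Qed.

Lemma ImpL_ge_partial al f L c0 : ImpL al f L -> (forall t, 0 <= t < al -> 0 <= f t) ->
  0 <= c0 < al -> RI f 0 c0 <= L.
Proof.
  intros [H1 H2] Hf Hc0. destruct (Rle_lt_dec (RI f 0 c0) L) as [|Hlt]; auto.
  destruct (H2 (RI f 0 c0 - L)) as [d [Hd Hc]]; [lra|].
  set (c := (Rmax c0 (al - d) + al) / 2).
  assert (Hcm : c0 <= c /\ al - d < c < al).
  { unfold c. destruct (Rle_dec c0 (al-d)).
    rewrite Rmax_right by lra; lra. rewrite Rmax_left by lra; lra. }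
  specialize (Hc c ltac:(lra)). destruct (H1 c ltac:(lra)) as [pr _].
  assert (RI f 0 c0 <= RI f 0 c).
  { apply RI_mono_nonneg; auto; try lra. intros; apply Hf; lra. }
  apply Rabs_lt_inv in Hc. lra.
Qed.

Lemma ImpL_le_bound al f L M : ImpL al f L ->
  (forall c, 0 <= c < al -> RI f 0 c <= M) -> L <= M.
Proof.
  intros [H1 H2] HM. destruct (Rle_lt_dec L M) as [|Hlt]; auto.
  destruct (H2 (L - M)) as [d [Hd Hc]]; [lra|].
  specialize (Hc (al - d/2) ltac:(lra)). specialize (HM (al - d/2) ltac:(lra)).
  apply Rabs_lt_inv in Hc. lra.
Qed.

Lemma ImpL_le al f g L1 L2 : ImpL al f L1 -> ImpL al g L2 ->
  (forall t, 0 <= t < al -> f t <= g t) -> L1 <= L2.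
Proof.
  intros [H1 H2] [G1 G2] Hfg. destruct (Rle_lt_dec L1 L2) as [|Hlt]; auto.
  destruct (H2 ((L1 - L2)/2)) as [d1 [Hd1 Hc1]]; [lra|].
  destruct (G2 ((L1 - L2)/2)) as [d2 [Hd2 Hc2]]; [lra|].
  set (d := Rmin d1 d2).
  assert (0 < d <= d1 /\ d <= d2) by (unfold d, Rmin; destruct Rle_dec; lra).
  specialize (Hc1 (al - d/2) ltac:(lra)). specialize (Hc2 (al - d/2) ltac:(lra)).
  destruct (H1 (al - d/2) ltac:(lra)) as [p1 _].
  destruct (G1 (al - d/2) ltac:(lra)) as [p2 _].
  assert (RI f 0 (al - d/2) <= RI g 0 (al - d/2)).
  { apply RI_le; auto; try lra. intros; apply Hfg; lra. }
  apply Rabs_lt_inv in Hc1. apply Rabs_lt_inv in Hc2. lra.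
Qed.

Lemma ImpL_unique al f L1 L2 : ImpL al f L1 -> ImpL al f L2 -> L1 = L2.
Proof.
  intros. apply Rle_antisym; eapply ImpL_le; eauto; intros; lra.
Qed.

Lemma ImpL_lin al f g l L1 L2 : ImpL al f L1 -> ImpL al g L2 ->
  ImpL al (fun x => f x + l * g x) (L1 + l * L2).
Proof.
  intros [H1 H2] [G1 G2]. split.
  - intros c Hc. destruct (H1 c Hc) as [p1 _]. destruct (G1 c Hc) as [p2 _].
    exists (int_lin _ _ l _ _ p1 p2). exact I.
  - intros eps Heps.
    destruct (H2 (eps/2)) as [d1 [Hd1 Hc1]]; [lra|].
    assert (Hl : 0 < Rabs l + 1) by (pose proof (Rabs_pos l); lra).
    destruct (G2 (eps/2/(Rabs l + 1))) as [d2 [Hd2 Hc2]].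
    { apply Rdiv_lt_0_compat; lra. }
    set (d := Rmin d1 d2).
    assert (0 < d <= d1 /\ d <= d2) by (unfold d, Rmin; destruct Rle_dec; lra).
    exists d. split; [lra|]. intros c Hc.
    destruct (H1 c ltac:(lra)) as [p1 _]. destruct (G1 c ltac:(lra)) as [p2 _].
    rewrite RI_lin by auto.
    specialize (Hc1 c ltac:(lra)). specialize (Hc2 c ltac:(lra)).
    replace (RI f 0 c + l * RI g 0 c - (L1 + l * L2)) with
      ((RI f 0 c - L1) + l * (RI g 0 c - L2)) by ring.
    eapply Rle_lt_trans. apply Rabs_triang. rewrite Rabs_mult.
    assert (HH : Rabs l * Rabs (RI g 0 c - L2) <= (Rabs l + 1) * (eps / 2 / (Rabs l + 1))).
    { apply Rmult_le_compat; try apply Rabs_pos; lra. }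
    replace ((Rabs l + 1) * (eps / 2 / (Rabs l + 1))) with (eps/2) in HH by (field; lra).
    lra.
Qed.

Lemma ImpL_ext al f g L : ImpL al f L -> (forall t, 0 <= t < al -> f t = g t) ->
  ImpL al g L.
Proof.
  intros [H1 H2] Hfg. split.
  - intros c Hc. destruct (H1 c Hc) as [p _].
    assert (Hq : forall t, 0 <= t <= c -> f t = g t) by (intros; apply Hfg; lra).
    exists (RiemInt_ext f g 0 c ltac:(lra) Hq p). exact I.
  - intros eps Heps. destruct (H2 eps Heps) as [d [Hd Hc]]. exists d. split; auto.
    intros c Hcc. destruct (H1 c ltac:(lra)) as [p _].
    rewrite <- (RI_ext f g); auto; try lra. intros; apply Hfg; lra.
Qed.

Lemma ImpL_proper al f M : 0 < al -> Riemann_integrable f 0 al ->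
  (forall t, 0 <= t <= al -> Rabs (f t) <= M) -> ImpL al f (RI f 0 al).
Proof.
  intros Hal pr HM. split.
  - intros c Hc. exists (int_sub f 0 al c pr ltac:(lra)). exact I.
  - intros eps Heps.
    assert (Hl : 0 < Rabs M + 1) by (pose proof (Rabs_pos M); lra).
    set (d := Rmin al (eps / (Rabs M + 1))).
    assert (Hd0 : 0 < eps / (Rabs M + 1)) by (apply Rdiv_lt_0_compat; lra).
    assert (0 < d <= al /\ d <= eps / (Rabs M + 1)) by (unfold d, Rmin; destruct Rle_dec; lra).
    exists d. split; [lra|]. intros c Hc.
    rewrite <- (RI_chasles f 0 c al pr ltac:(lra)).
    replace (RI f 0 c - (RI f 0 c + RI f c al)) with (- RI f c al) by ring.
    rewrite Rabs_Ropp.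
    eapply Rle_lt_trans. apply (RI_bound f M c al); try lra.
    eapply int_sub2; eauto; lra. intros; apply HM; lra.
    assert (M <= Rabs M) by apply RRle_abs.
    assert (M * (al - c) <= Rabs M * (al - c)) by (apply Rmult_le_compat_r; lra).
    assert (Rabs M * (al - c) < (Rabs M + 1) * d).
    { apply Rle_lt_trans with (Rabs M * d). apply Rmult_le_compat_l; [apply Rabs_pos|lra].
      lra. }
    assert ((Rabs M + 1) * d <= (Rabs M + 1) * (eps / (Rabs M + 1))).
    { apply Rmult_le_compat_l; lra. }
    replace ((Rabs M + 1) * (eps / (Rabs M + 1))) with eps in H3 by (field; lra).
    lra.
Qed.

Lemma ImpL_exists al f M : 0 < al ->
  (forall c, 0 <= c < al -> exists _ : Riemann_integrable f 0 c, True) ->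
  (forall t, 0 <= t < al -> 0 <= f t) ->
  (forall c, 0 <= c < al -> RI f 0 c <= M) -> exists L, ImpL al f L.
Proof.
  intros Hal Hi Hf HM.
  set (E := fun y => exists c, 0 <= c < al /\ y = RI f 0 c).
  assert (Hb : bound E) by (exists M; intros y [c [Hc ->]]; auto).
  assert (He : exists y, E y) by (exists (RI f 0 0); exists 0; split; [lra|auto]).
  destruct (completeness E Hb He) as [L [HL1 HL2]].
  exists L. split; auto.
  intros eps Heps.
  assert (exists c0, 0 <= c0 < al /\ L - eps < RI f 0 c0).
  { apply NNPP. intro Hn. assert (L <= L - eps); [|lra].
    apply HL2. intros y [c [Hc ->]]. apply Rnot_lt_le. intro. apply Hn. exists c; auto. }
  destruct H as [c0 [Hc0 Hlt]].
  exists (al - c0). split; [lra|]. intros c Hc.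
  destruct (Hi c ltac:(lra)) as [pr _].
  assert (RI f 0 c0 <= RI f 0 c).
  { apply RI_mono_nonneg; auto; try lra. intros; apply Hf; lra. }
  assert (RI f 0 c <= L) by (apply HL1; exists c; split; [lra|auto]).
  apply Rabs_def1; lra.
Qed.

Lemma cpt_sqrt g x : continuity_pt g x -> 0 <= g x -> continuity_pt (fun t => sqrt (g t)) x.
Proof.
  intros. change (continuity_pt (comp sqrt g) x). apply continuity_pt_comp; auto.
  apply continuity_pt_sqrt; auto.
Qed.

Lemma cpt_cos x : continuity_pt cos x.
Proof. apply continuity_cos. Qed.

Lemma cpt_const k x : continuity_pt (fun _ => k) x.
Proof. apply continuity_pt_const. intros a b; reflexivity. Qed.

Lemma cpt_minus f g x : continuity_pt f x -> continuity_pt g x -> continuity_pt (fun t => f t - g t) x.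
Proof. intros; apply (continuity_pt_minus f g); auto. Qed.
Lemma cpt_plus f g x : continuity_pt f x -> continuity_pt g x -> continuity_pt (fun t => f t + g t) x.
Proof. intros; apply (continuity_pt_plus f g); auto. Qed.
Lemma cpt_mult f g x : continuity_pt f x -> continuity_pt g x -> continuity_pt (fun t => f t * g t) x.
Proof. intros; apply (continuity_pt_mult f g); auto. Qed.
Lemma cpt_div f g x : continuity_pt f x -> continuity_pt g x -> g x <> 0 -> continuity_pt (fun t => f t / g t) x.
Proof. intros; apply (continuity_pt_div f g); auto. Qed.
Lemma cpt_id x : continuity_pt (fun t => t) x.
Proof. apply derivable_continuous_pt. apply derivable_pt_id. Qed.
Lemma cpt_atan g x : continuity_pt g x -> continuity_pt (fun t => atan (g t)) x.
Proof.
  intros. change (continuity_pt (comp atan g) x). apply continuity_pt_comp; auto.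
  apply derivable_continuous_pt. exists (/ (1 + (g x)^2)). apply derivable_pt_lim_atan.
Qed.

Ltac cpt := repeat (first [ apply cpt_div | apply cpt_mult | apply cpt_minus | apply cpt_plus
   | apply cpt_sqrt | apply cpt_cos | apply cpt_const | apply cpt_id | apply cpt_atan ]).

Lemma cos_le_mono x y : 0 <= x <= y -> y <= PI -> cos y <= cos x.
Proof.
  intros. destruct (Req_dec x y) as [->|]; [lra|].
  left; apply cos_decreasing_1; lra.
Qed.

Lemma cos_diff x y : 0 <= x < y -> y <= PI -> 0 < cos x - cos y <= y - x.
Proof.
  intros. split. { assert (cos y < cos x) by (apply cos_decreasing_1; lra). lra. }
  rewrite form2.
  replace ((x - y)/2) with (-((y-x)/2)) by field. rewrite sin_neg.
  assert (H1 := sin_lt_x ((y-x)/2) ltac:(lra)).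
  assert (H2 : 0 <= sin ((y-x)/2)) by (apply sin_ge_0; lra).
  assert (H3 := SIN_bound ((x+y)/2)).
  assert (H4 : 0 <= sin ((x+y)/2)) by (apply sin_ge_0; lra).
  nra.
Qed.

Lemma p_lower al t : 0 < al <= PI/2 -> 0 <= t <= al ->
  sin (al/2) / 2 * (al - t) <= cos t - cos al.
Proof.
  intros Ha Ht. assert (HP := PI2_1). assert (HP4 := PI_4).
  rewrite form2. replace ((t - al)/2) with (-((al-t)/2)) by field. rewrite sin_neg.
  assert (H1 : (al - t)/2/2 <= sin ((al-t)/2)) by (apply sin_half_lb; lra).
  assert (H2 : sin (al/2) <= sin ((t+al)/2)).
  { destruct (Req_dec t 0) as [->|]. right; f_equal; field.
    left; apply sin_increasing_1; lra. }
  assert (H3 : 0 <= sin (al/2)) by (apply sin_ge_0; lra).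
  nra.
Qed.

Lemma sin_half_pos al : 0 < al <= PI/2 -> 0 < sin (al/2).
Proof. intros. apply sin_gt_0; lra. Qed.

Definition geF (al K e t : R) : R := e / (sqrt (K*(al - t)) * (K*(al-t) + e)).
Definition GeF (al K e t : R) : R := -(2*sqrt e/K) * atan (/ sqrt e * sqrt (K*(al - t))).

Lemma dGe al K e t : 0 < K -> 0 < e -> t < al -> derivable_pt_lim (GeF al K e) t (geF al K e t).
Proof.
  intros HK He Ht.
  assert (Hs : 0 < K*(al-t)) by nra.
  assert (Hse : 0 < sqrt e) by (apply sqrt_lt_R0; auto).
  assert (Hss : 0 < sqrt (K*(al-t))) by (apply sqrt_lt_R0; auto).
  assert (Hee : sqrt e * sqrt e = e) by (apply sqrt_sqrt; lra).
  assert (Hsss : sqrt (K*(al-t)) * sqrt (K*(al-t)) = K*(al-t)) by (apply sqrt_sqrt; lra).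
  change (derivable_pt_lim (mult_real_fct (-(2*sqrt e/K))
     (comp atan (mult_real_fct (/ sqrt e) (comp sqrt (mult_real_fct K (fun x => al - x)))))) t
     (geF al K e t)).
  replace (geF al K e t) with ((-(2*sqrt e/K)) * ((/ (1 + (/ sqrt e * sqrt (K*(al-t)))^2)) *
     (/ sqrt e * (/ (2 * sqrt (K*(al-t))) * (K * (0 - 1)))))).
  2:{ unfold geF. set (se := sqrt e) in *. set (ss := sqrt (K*(al-t))) in *.
      rewrite <- Hee, <- Hsss. field. repeat split; nra. }
  apply derivable_pt_lim_scal. apply derivable_pt_lim_comp.
  - apply derivable_pt_lim_scal. apply derivable_pt_lim_comp.
    + apply derivable_pt_lim_scal. apply derivable_pt_lim_minus.
      apply derivable_pt_lim_const. apply derivable_pt_lim_id.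
    + apply derivable_pt_lim_sqrt. unfold mult_real_fct; lra.
  - apply derivable_pt_lim_atan.
Qed.

Lemma ge_cont al K e t : 0 < K -> 0 < e -> t < al -> continuity_pt (geF al K e) t.
Proof.
  intros HK He Ht. assert (Hs : 0 < K*(al-t)) by nra.
  assert (Hss : 0 < sqrt (K*(al-t))) by (apply sqrt_lt_R0; auto).
  unfold geF. cpt; simpl; try nra.
Qed.

Lemma ge_est al K e c : 0 < K -> 0 < e -> 0 <= c < al ->
  RI (geF al K e) 0 c <= 2 * sqrt e / K * PI.
Proof.
  intros HK He Hc.
  rewrite (RI_FTC _ (GeF al K e)); try lra.
  2:{ intros; apply dGe; auto; lra. }
  2:{ intros; apply ge_cont; auto; lra. }
  unfold GeF.
  assert (Hse : 0 < sqrt e) by (apply sqrt_lt_R0; auto).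
  assert (0 < 2 * sqrt e / K) by (apply Rdiv_lt_0_compat; lra).
  destruct (atan_bound (/ sqrt e * sqrt (K*(al-c)))).
  destruct (atan_bound (/ sqrt e * sqrt (K*(al-0)))).
  nra.
Qed.

Definition fA (al b t : R) : R := sqrt (cos t - cos al) / (cos t - b).
Definition kf (al b t : R) : R := / (sqrt (cos t - cos al) * (cos t - b)).
Definition hQ (al b1 b2 t : R) : R :=
  sqrt (cos t - cos al) * (b1 - b2) / ((cos t - b1) * (cos t - b2)).


Lemma c_facts al : 0 < al <= PI/2 -> 0 <= cos al < 1.
Proof.
  intros Ha. assert (HP := PI2_1). split. apply cos_ge_0; lra.
  rewrite <- cos_0. apply cos_decreasing_1; lra.
Qed.

Lemma x_facts al t : 0 < al <= PI/2 -> 0 <= t <= al -> cos al <= cos t <= 1.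
Proof.
  intros Ha Ht. assert (HP := PI2_1). split. apply cos_le_mono; lra.
  apply COS_bound.
Qed.

Lemma x_facts_strict al t : 0 < al <= PI/2 -> 0 <= t < al -> cos al < cos t.
Proof.
  intros Ha Ht. assert (HP := PI2_1). apply cos_decreasing_1; lra.
Qed.

Lemma fA_int al b : 0 < al <= PI/2 -> b < cos al -> Riemann_integrable (fA al b) 0 al.
Proof.
  intros Ha Hb. apply cont_int; [lra|]. intros t Ht.
  destruct (x_facts al t Ha Ht). unfold fA. cpt; lra.
Qed.

Lemma hQ_int al b1 b2 : 0 < al <= PI/2 -> b1 < cos al -> b2 < cos al ->
  Riemann_integrable (hQ al b1 b2) 0 al.
Proof.
  intros Ha Hb1 Hb2. apply cont_int; [lra|]. intros t Ht.
  destruct (x_facts al t Ha Ht). unfold hQ. cpt; try lra. nra.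
Qed.

Lemma kf_int al b c : 0 < al <= PI/2 -> b < cos al -> 0 <= c < al ->
  Riemann_integrable (kf al b) 0 c.
Proof.
  intros Ha Hb Hc. apply cont_int; [lra|]. intros t Ht.
  assert (H := x_facts_strict al t Ha ltac:(lra)).
  assert (0 < sqrt (cos t - cos al)) by (apply sqrt_lt_R0; lra).
  unfold kf. apply continuity_pt_inv. cpt; lra. nra.
Qed.

Definition Af (al b : R) : R := RI (fA al b) 0 al.

Definition Simp (al : R) (f : R -> R) : R :=
  match excluded_middle_informative (exists L, ImpL al f L) with
  | left H => proj1_sig (constructive_indefinite_description _ H)
  | right _ => 0 end.

Lemma Simp_spec al f : (exists L, ImpL al f L) -> ImpL al f (Simp al f).
Proof.
  intros H. unfold Simp. destruct excluded_middle_informative as [H'|H']; [|tauto].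
  apply (proj2_sig (constructive_indefinite_description _ H')).
Qed.

Definition Sf (al b : R) : R := Simp al (kf al b).
Definition Tf (al b : R) : R := (cos al - b) * Sf al b.
Definition Df (al b : R) : R := Af al b - Tf al b.

Lemma ImpL_scal al f l L : 0 < al -> ImpL al f L -> ImpL al (fun x => l * f x) (l * L).
Proof.
  intros Hal H.
  assert (H0 : ImpL al (fun _ => 0) 0).
  { assert (H0 := ImpL_proper al (fun _ => 0) 0 Hal (int_const 0 0 al)).
    rewrite RI_const in H0. replace (0 * (al - 0)) with 0 in H0 by ring.
    apply H0. intros; rewrite Rabs_R0; lra. }
  pose proof (ImpL_lin al _ _ l _ _ H0 H) as H1.
  replace (l * L) with (0 + l * L) by ring.
  eapply ImpL_ext; eauto. intros; simpl; ring.
Qed.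

Lemma ekf_le_ge al b t : 0 < al <= PI/2 -> b < cos al -> 0 <= t < al ->
  (cos al - b) * kf al b t <= geF al (sin (al/2)/2) (cos al - b) t.
Proof.
  intros Ha Hb Ht.
  assert (HK := sin_half_pos al Ha).
  set (K := sin (al/2)/2).
  assert (HKs : K * (al - t) <= cos t - cos al) by (apply p_lower; auto; lra).
  assert (Hs : 0 < K * (al - t)) by (unfold K; nra).
  assert (H1 : sqrt (K*(al-t)) <= sqrt (cos t - cos al)) by (apply sqrt_le_1_alt; lra).
  assert (H2 : 0 < sqrt (K*(al-t))) by (apply sqrt_lt_R0; lra).
  unfold kf, geF. fold K.
  replace (cos t - b) with ((cos t - cos al) + (cos al - b)) by ring.
  set (e := cos al - b) in *. set (p := cos t - cos al) in *.
  assert (0 < e) by (unfold e; lra).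
  rewrite <- Rdiv_def. unfold Rdiv. apply Rmult_le_compat_l; [lra|].
  apply Rinv_le_contravar. apply Rmult_lt_0_compat; lra.
  apply Rmult_le_compat; lra.
Qed.

Lemma S_exists al b : 0 < al <= PI/2 -> b < cos al -> exists L, ImpL al (kf al b) L.
Proof.
  intros Ha Hb. set (e := cos al - b). assert (He : 0 < e) by (unfold e; lra).
  assert (HK := sin_half_pos al Ha).
  apply (ImpL_exists al _ (/ e * (2 * sqrt e / (sin (al/2)/2) * PI))); [lra| | |].
  - intros c Hc. exists (kf_int al b c Ha Hb Hc). exact I.
  - intros t Ht. unfold kf. assert (H := x_facts_strict al t Ha Ht).
    assert (0 < sqrt (cos t - cos al)) by (apply sqrt_lt_R0; lra).
    left; apply Rinv_0_lt_compat; nra.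
  - intros c Hc.
    assert (Hge : Riemann_integrable (geF al (sin (al/2)/2) e) 0 c).
    { apply cont_int; [lra|]. intros; apply ge_cont; lra. }
    apply Rle_trans with (RI (fun t => / e * geF al (sin (al/2)/2) e t) 0 c).
    + apply RI_le; [lra|apply kf_int; auto|apply int_scal; auto; lra|].
      intros t Ht. assert (H := ekf_le_ge al b t Ha Hb ltac:(lra)). fold e in H.
      apply (Rmult_le_reg_l e); auto. rewrite <- Rmult_assoc, Rinv_r, Rmult_1_l; lra.
    + rewrite RI_scal; auto; [|lra]. apply Rmult_le_compat_l.
      left; apply Rinv_0_lt_compat; auto. apply ge_est; lra.
Qed.

Lemma S_spec al b : 0 < al <= PI/2 -> b < cos al -> ImpL al (kf al b) (Sf al b).
Proof. intros; apply Simp_spec, S_exists; auto. Qed.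

Lemma T_spec al b : 0 < al <= PI/2 -> b < cos al ->
  ImpL al (fun t => (cos al - b) * kf al b t) (Tf al b).
Proof. intros. apply ImpL_scal; [lra|]. apply S_spec; auto. Qed.

Lemma A_diff al b1 b2 : 0 < al <= PI/2 -> b1 < cos al -> b2 < cos al ->
  Af al b1 - Af al b2 = RI (hQ al b1 b2) 0 al.
Proof.
  intros Ha H1 H2. unfold Af.
  replace (RI (fA al b1) 0 al - RI (fA al b2) 0 al) with
    (RI (fA al b1) 0 al + (-1) * RI (fA al b2) 0 al) by ring.
  rewrite <- RI_lin by (apply fA_int; auto).
  apply RI_ext; [lra| apply int_lin; apply fA_int; auto |].
  intros t Ht. destruct (x_facts al t Ha Ht). unfold fA, hQ. field. lra.
Qed.

Lemma sp_sq al t : 0 <= t <= al -> 0 < al <= PI/2 ->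
  sqrt (cos t - cos al) * sqrt (cos t - cos al) = cos t - cos al.
Proof. intros. apply sqrt_sqrt. destruct (x_facts al t); auto; lra. Qed.

Lemma hQ_bound al b1 b2 t : 0 < al <= PI/2 -> b1 < cos al -> b2 < cos al -> 0 <= t <= al ->
  Rabs (hQ al b1 b2 t) <= Rabs (b1 - b2) / ((cos al - b1) * (cos al - b2)).
Proof.
  intros Ha H1 H2 Ht. destruct (x_facts al t Ha Ht) as [Hx1 Hx2].
  assert (Hc := c_facts al Ha).
  assert (Hsp : sqrt (cos t - cos al) <= 1).
  { rewrite <- sqrt_1. apply sqrt_le_1_alt. lra. }
  assert (0 <= sqrt (cos t - cos al)) by apply sqrt_pos.
  unfold hQ. unfold Rdiv. rewrite !Rabs_mult, Rabs_inv.
  rewrite (Rabs_right (sqrt _)) by lra.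
  rewrite (Rabs_right ((cos t - b1) * (cos t - b2))) by nra.
  assert (0 < (cos al - b1) * (cos al - b2)) by nra.
  assert (/ ((cos t - b1) * (cos t - b2)) <= / ((cos al - b1) * (cos al - b2))).
  { apply Rinv_le_contravar; auto. apply Rmult_le_compat; lra. }
  assert (0 <= / ((cos t - b1) * (cos t - b2))) by (left; apply Rinv_0_lt_compat; nra).
  assert (0 <= Rabs (b1 - b2)) by apply Rabs_pos.
  apply Rle_trans with (1 * Rabs (b1 - b2) * / ((cos t - b1) * (cos t - b2))).
  - apply Rmult_le_compat_r; auto. apply Rmult_le_compat_r; auto.
  - rewrite Rmult_1_l. apply Rmult_le_compat_l; auto.
Qed.

Lemma T_diff al b1 b2 : 0 < al <= PI/2 -> b1 < cos al -> b2 < cos al ->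
  Tf al b1 - Tf al b2 = - RI (hQ al b1 b2) 0 al.
Proof.
  intros Ha H1 H2.
  pose proof (ImpL_lin al _ _ (-1) _ _ (T_spec al b1 Ha H1) (T_spec al b2 Ha H2)) as HL.
  assert (HR : ImpL al (fun t => -1 * hQ al b1 b2 t) (RI (fun t => -1 * hQ al b1 b2 t) 0 al)).
  { apply (ImpL_proper al _ (Rabs (b1 - b2) / ((cos al - b1) * (cos al - b2)))); [lra| |].
    apply int_scal; [apply hQ_int; auto|lra].
    intros t Ht. rewrite Rabs_mult. replace (Rabs (-1)) with 1 by (unfold Rabs; destruct Rcase_abs; lra). rewrite Rmult_1_l. apply hQ_bound; auto. }
  rewrite RI_scal in HR by (try apply hQ_int; auto; lra).
  replace (Tf al b1 - Tf al b2) with (Tf al b1 + -1 * Tf al b2) by ring.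
  replace (- RI (hQ al b1 b2) 0 al) with (-1 * RI (hQ al b1 b2) 0 al) by ring.
  eapply ImpL_unique; [exact HL|].
  eapply ImpL_ext; [exact HR|].
  intros t Ht. assert (Hx := x_facts_strict al t Ha Ht).
  assert (Hq := sp_sq al t ltac:(lra) Ha).
  assert (Hs : 0 < sqrt (cos t - cos al)) by (apply sqrt_lt_R0; lra).
  unfold hQ, kf.
  set (sp := sqrt (cos t - cos al)) in *. set (x := cos t) in *.
  replace (cos al) with (x - sp * sp) by lra.
  field. split; nra.
Qed.

Lemma Q_pos al b1 b2 : 0 < al <= PI/2 -> b2 < b1 -> b1 < cos al ->
  0 < RI (hQ al b1 b2) 0 al.
Proof.
  intros Ha H12 H1. assert (HP := PI2_1).
  assert (Hc := c_facts al Ha).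
  assert (Hd : 0 < cos (al/2) - cos al).
  { assert (cos al < cos (al/2)) by (apply cos_decreasing_1; lra). lra. }
  set (m := sqrt (cos (al/2) - cos al) * (b1 - b2) / ((1 - b1) * (1 - b2))).
  assert (Hm : 0 < m).
  { unfold m. apply Rdiv_lt_0_compat. apply Rmult_lt_0_compat; [apply sqrt_lt_R0|]; lra.
    nra. }
  pose proof (hQ_int al b1 b2 Ha H1 ltac:(lra)) as pr.
  rewrite <- (RI_chasles _ 0 (al/2) al pr) by lra.
  assert (HA : m * (al/2 - 0) <= RI (hQ al b1 b2) 0 (al/2)).
  { rewrite <- RI_const. apply RI_le; [lra|apply int_const|eapply int_sub; eauto; lra|].
    intros t Ht. destruct (x_facts al t Ha ltac:(lra)) as [Hx1 Hx2].
    assert (Hxt : cos (al/2) <= cos t) by (apply cos_le_mono; lra).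
    unfold hQ, m.
    assert (Hs : sqrt (cos (al / 2) - cos al) <= sqrt (cos t - cos al)) by (apply sqrt_le_1_alt; lra).
    assert (0 < sqrt (cos (al / 2) - cos al)) by (apply sqrt_lt_R0; lra).
    unfold Rdiv. apply Rmult_le_compat. 
    - apply Rmult_le_pos; lra.
    - left; apply Rinv_0_lt_compat; nra.
    - apply Rmult_le_compat_r; lra.
    - apply Rinv_le_contravar. nra. apply Rmult_le_compat; lra. }
  assert (HB : 0 <= RI (hQ al b1 b2) (al/2) al).
  { replace 0 with (RI (fun _ => 0) (al/2) al) by (rewrite RI_const; ring).
    apply RI_le; [lra|apply int_const|eapply int_sub2; eauto; lra|].
    intros t Ht. destruct (x_facts al t Ha ltac:(lra)) as [Hx1 Hx2].
    unfold hQ. apply Rmult_le_pos. apply Rmult_le_pos; [apply sqrt_pos|lra].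
    left; apply Rinv_0_lt_compat; nra. }
  nra.
Qed.

Lemma D_diff al b1 b2 : 0 < al <= PI/2 -> b1 < cos al -> b2 < cos al ->
  Df al b1 - Df al b2 = 2 * RI (hQ al b1 b2) 0 al.
Proof.
  intros. unfold Df.
  assert (H3 := A_diff al b1 b2 H H0 H1). assert (H4 := T_diff al b1 b2 H H0 H1). lra.
Qed.

Lemma D_mono al b1 b2 : 0 < al <= PI/2 -> b2 < b1 -> b1 < cos al -> Df al b2 < Df al b1.
Proof.
  intros. assert (H2 := D_diff al b1 b2 H ltac:(lra) ltac:(lra)).
  assert (H3 := Q_pos al b1 b2 H H0 H1). lra.
Qed.

Lemma D_lip al b0 b : 0 < al <= PI/2 -> b0 < cos al -> Rabs (b - b0) <= (cos al - b0)/2 ->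
  Rabs (Df al b - Df al b0) <= 4 * al / ((cos al - b0) * (cos al - b0)) * Rabs (b - b0).
Proof.
  intros Ha Hb0 Hb. apply Rabs_le_inv in Hb as Hb'.
  assert (Hb1 : b < cos al) by lra.
  rewrite D_diff by auto. rewrite Rabs_mult, (Rabs_right 2) by lra.
  assert (H := RI_bound (hQ al b b0) (Rabs (b - b0) / ((cos al - b) * (cos al - b0))) 0 al
     ltac:(lra) (hQ_int al b b0 Ha Hb1 Hb0)
     ltac:(intros; apply hQ_bound; auto; lra)).
  assert (0 <= Rabs (b - b0)) by apply Rabs_pos.
  assert (Hq : Rabs (b - b0) / ((cos al - b) * (cos al - b0)) <=
           2 * Rabs (b - b0) / ((cos al - b0) * (cos al - b0))).
  { assert (Hinv : / ((cos al - b) * (cos al - b0)) <= / ((cos al - b0) * (cos al - b0) / 2)).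
    { apply Rinv_le_contravar. nra. nra. }
    replace (/ ((cos al - b0) * (cos al - b0) / 2)) with (2 * / ((cos al - b0) * (cos al - b0))) in Hinv
      by (field; lra).
    unfold Rdiv. replace (2 * Rabs (b - b0) * / ((cos al - b0) * (cos al - b0))) with
      (Rabs (b - b0) * (2 * / ((cos al - b0) * (cos al - b0)))) by ring.
    apply Rmult_le_compat_l; auto. }
  assert (Hq2 : Rabs (b - b0) / ((cos al - b) * (cos al - b0)) * (al - 0) <=
     2 * Rabs (b - b0) / ((cos al - b0) * (cos al - b0)) * al).
  { replace (al - 0) with al by ring. apply Rmult_le_compat_r; lra. }
  replace (4 * al / ((cos al - b0) * (cos al - b0)) * Rabs (b - b0)) with
    (2 * (2 * Rabs (b - b0) / ((cos al - b0) * (cos al - b0)) * al)) by (field; nra).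
  lra.
Qed.

Lemma T_upper al b : 0 < al <= PI/2 -> b < cos al ->
  Tf al b <= 2 * sqrt (cos al - b) / (sin (al/2)/2) * PI.
Proof.
  intros Ha Hb. assert (HK := sin_half_pos al Ha).
  apply (ImpL_le_bound al _ _ _ (T_spec al b Ha Hb)).
  intros c Hc. eapply Rle_trans; [|apply (ge_est al (sin (al/2)/2) (cos al - b) c); lra].
  apply RI_le; [lra| |apply cont_int; [lra|intros; apply ge_cont; lra]|].
  - apply int_scal; [apply kf_int; auto|lra].
  - intros t Ht. apply ekf_le_ge; auto; lra.
Qed.

Lemma A_lower al b : 0 < al <= PI/2 -> -1 <= b < cos al ->
  al / 2 * (sqrt (cos (al/2) - cos al) / 2) <= Af al b.
Proof.
  intros Ha Hb. assert (HP := PI2_1).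
  assert (Hc := c_facts al Ha).
  assert (Hd : 0 < cos (al/2) - cos al).
  { assert (cos al < cos (al/2)) by (apply cos_decreasing_1; lra). lra. }
  pose proof (fA_int al b Ha ltac:(lra)) as pr. unfold Af.
  rewrite <- (RI_chasles _ 0 (al/2) al pr) by lra.
  assert (HA : sqrt (cos (al/2) - cos al) / 2 * (al/2 - 0) <= RI (fA al b) 0 (al/2)).
  { rewrite <- RI_const. apply RI_le; [lra|apply int_const|eapply int_sub; eauto; lra|].
    intros t Ht. destruct (x_facts al t Ha ltac:(lra)) as [Hx1 Hx2].
    assert (Hxt : cos (al/2) <= cos t) by (apply cos_le_mono; lra).
    unfold fA.
    assert (Hs : sqrt (cos (al / 2) - cos al) <= sqrt (cos t - cos al)) by (apply sqrt_le_1_alt; lra).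
    assert (0 < sqrt (cos (al / 2) - cos al)) by (apply sqrt_lt_R0; lra).
    unfold Rdiv. apply Rmult_le_compat; try lra.
    apply Rinv_le_contravar; lra. }
  assert (HB : 0 <= RI (fA al b) (al/2) al).
  { replace 0 with (RI (fun _ => 0) (al/2) al) by (rewrite RI_const; ring).
    apply RI_le; [lra|apply int_const|eapply int_sub2; eauto; lra|].
    intros t Ht. destruct (x_facts al t Ha ltac:(lra)) as [Hx1 Hx2].
    unfold fA. apply Rmult_le_pos; [apply sqrt_pos|]. left; apply Rinv_0_lt_compat; lra. }
  replace (al/2 - 0) with (al/2) in HA by ring. lra.
Qed.

Lemma D_near_c al : 0 < al <= PI/2 -> exists e0, 0 < e0 /\
  forall b, cos al - e0 <= b < cos al -> 0 < Df al b.
Proof.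
  intros Ha. assert (HP := PI2_1). assert (Hc := c_facts al Ha).
  assert (HK := sin_half_pos al Ha).
  assert (Hd : 0 < cos (al/2) - cos al).
  { assert (cos al < cos (al/2)) by (apply cos_decreasing_1; lra). lra. }
  set (sd := sqrt (cos (al/2) - cos al)).
  assert (Hsd : 0 < sd) by (apply sqrt_lt_R0; lra).
  set (X := al * sd * (sin (al/2)/2) / (16 * PI)).
  assert (HX : 0 < X).
  { unfold X. apply Rdiv_lt_0_compat; [|lra]. repeat apply Rmult_lt_0_compat; lra. }
  exists (Rmin 1 (X * X)). split.
  { unfold Rmin; destruct Rle_dec; nra. }
  intros b Hb. unfold Df.
  assert (He1 : Rmin 1 (X*X) <= 1) by apply Rmin_l.
  assert (He2 : Rmin 1 (X*X) <= X*X) by apply Rmin_r.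
  assert (HAl := A_lower al b Ha ltac:(lra)).
  assert (HT := T_upper al b Ha ltac:(lra)).
  assert (Hse : sqrt (cos al - b) <= X).
  { rewrite <- (sqrt_square X) by lra. apply sqrt_le_1_alt. lra. }
  assert (HT2 : 2 * sqrt (cos al - b) / (sin (al / 2) / 2) * PI <= al * sd / 8).
  { apply Rle_trans with (2 * X / (sin (al / 2) / 2) * PI).
    - apply Rmult_le_compat_r; [lra|]. unfold Rdiv. apply Rmult_le_compat_r.
      left; apply Rinv_0_lt_compat; lra. lra.
    - unfold X. right. field. split; lra. }
  fold sd in HAl. nra.
Qed.

Lemma pw_m1 al t m : 0 < al <= PI/2 -> 0 <= t < al -> 0 <= m ->
  m * 2 <= 1 - cos t ->
  fA al (-1) t + 1 * m <= (cos al - -1) * kf al (-1) t.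
Proof.
  intros Ha Ht Hm Hmt. assert (Hc := c_facts al Ha).
  destruct (x_facts al t Ha ltac:(lra)) as [Hx1 Hx2].
  assert (Hx := x_facts_strict al t Ha Ht).
  assert (Hq := sp_sq al t ltac:(lra) Ha).
  assert (Hs : 0 < sqrt (cos t - cos al)) by (apply sqrt_lt_R0; lra).
  assert (Hs1 : sqrt (cos t - cos al) <= 1).
  { rewrite <- sqrt_1. apply sqrt_le_1_alt. lra. }
  unfold fA, kf.
  set (sp := sqrt (cos t - cos al)) in *. set (x := cos t) in *.
  assert (E : (cos al - -1) * / (sp * (x - -1)) - (sp / (x - -1) + 1 * m) =
     ((1 + 2 * cos al - x) - m * sp * (x + 1)) / (sp * (x + 1))).
  { replace (cos al) with (x - sp * sp) by lra. field. split; lra. }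
  assert (0 <= ((1 + 2 * cos al - x) - m * sp * (x + 1)) / (sp * (x + 1))).
  { assert (sp * (x + 1) <= 2) by nra. assert (m * (sp * (x+1)) <= m * 2) by nra.
    apply Rmult_le_pos. nra. left; apply Rinv_0_lt_compat; nra. }
  lra.
Qed.

Lemma D_m1 al : 0 < al <= PI/2 ->
  Df al (-1) <= - ((1 - cos (al/2)) / 2 * al / 8).
Proof.
  intros Ha. assert (HP := PI2_1). assert (Hc := c_facts al Ha).
  set (m := (1 - cos (al/2)) / 2).
  assert (Hm : 0 < m).
  { unfold m. assert (cos (al/2) < 1) by (rewrite <- cos_0; apply cos_decreasing_1; lra). lra. }
  set (eta := Rmin (al/4) (m * al / 8)).
  assert (Heta : 0 < eta <= al/4 /\ eta <= m * al / 8) by (unfold eta, Rmin; destruct Rle_dec; nra).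
  set (c' := al - eta).
  assert (Hb : -1 < cos al) by lra.
  pose proof (T_spec al (-1) Ha Hb) as HT.
  assert (H1 : RI (fun t => (cos al - -1) * kf al (-1) t) 0 c' <= Tf al (-1)).
  { apply (ImpL_ge_partial al _ _ c' HT); [|unfold c'; lra].
    intros t Ht. assert (H := pw_m1 al t 0 Ha Ht ltac:(lra)).
    assert (H' : 0 <= fA al (-1) t).
    { destruct (x_facts al t Ha ltac:(lra)). unfold fA. apply Rmult_le_pos; [apply sqrt_pos|].
      left; apply Rinv_0_lt_compat; lra. }
    assert (1 - cos t >= 0) by (pose proof (COS_bound t); lra).
    specialize (H ltac:(lra)). lra. }
  assert (prk : Riemann_integrable (fun t => (cos al - -1) * kf al (-1) t) 0 c').
  { apply int_scal; [apply kf_int; auto; unfold c'; lra|unfold c'; lra]. }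
  rewrite <- (RI_chasles _ 0 (al/2) c' prk) in H1 by (unfold c'; lra).
  pose proof (fA_int al (-1) Ha Hb) as prA.
  assert (H2 : RI (fA al (-1)) 0 (al/2) <= RI (fun t => (cos al - -1) * kf al (-1) t) 0 (al/2)).
  { apply RI_le; [lra|eapply int_sub; eauto; lra|eapply int_sub; eauto; unfold c'; lra|].
    intros t Ht. assert (H := pw_m1 al t 0 Ha ltac:(lra) ltac:(lra)).
    assert (1 - cos t >= 0) by (pose proof (COS_bound t); lra).
    specialize (H ltac:(lra)). lra. }
  assert (prA2 : Riemann_integrable (fA al (-1)) (al/2) c').
  { apply (int_sub2 _ 0 c' (al/2)); [apply (int_sub _ 0 al c' prA); unfold c'; lra | unfold c'; lra]. }
  assert (H3 : RI (fun t => fA al (-1) t + 1 * (fun _ => m) t) (al/2) c' <=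
               RI (fun t => (cos al - -1) * kf al (-1) t) (al/2) c').
  { apply RI_le; [unfold c'; lra|apply int_lin; auto; apply int_const|eapply int_sub2; eauto; unfold c'; lra|].
    intros t Ht. unfold c' in Ht. apply pw_m1; auto; try lra.
    assert (cos t <= cos (al/2)) by (apply cos_le_mono; lra). unfold m; lra. }
  rewrite RI_lin in H3 by (auto; apply int_const). rewrite RI_const in H3.
  assert (H4 : RI (fA al (-1)) 0 (al/2) + RI (fA al (-1)) (al/2) c' + RI (fA al (-1)) c' al = Af al (-1)).
  { unfold Af. rewrite (RI_chasles _ 0 (al/2) c'). apply RI_chasles; auto; unfold c'; lra.
    eapply int_sub; eauto; unfold c'; lra. unfold c'; lra. }
  assert (H5 : RI (fA al (-1)) c' al <= 1 * (al - c')).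
  { rewrite <- RI_const. apply RI_le; [unfold c'; lra|eapply int_sub2; eauto; unfold c'; lra|apply int_const|].
    intros t Ht. destruct (x_facts al t Ha ltac:(unfold c' in Ht; lra)) as [Hx1 Hx2].
    assert (Hs1 : sqrt (cos t - cos al) <= 1).
    { rewrite <- sqrt_1. apply sqrt_le_1_alt. lra. }
    unfold fA. assert (0 <= sqrt (cos t - cos al)) by apply sqrt_pos.
    unfold Rdiv. apply Rle_trans with (1 * / (cos t - -1)). apply Rmult_le_compat_r; [left; apply Rinv_0_lt_compat; lra|lra].
    rewrite Rmult_1_l. rewrite <- Rinv_1. apply Rinv_le_contravar; lra. }
  unfold Df. unfold c' in *. nra.
Qed.

Lemma D_near_m1 al : 0 < al <= PI/2 -> exists e1, 0 < e1 /\
  forall b, -1 < b <= -1 + e1 -> Df al b < 0.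
Proof.
  intros Ha. assert (HP := PI2_1). assert (Hc := c_facts al Ha).
  set (m := (1 - cos (al/2)) / 2).
  assert (Hm : 0 < m).
  { unfold m. assert (cos (al/2) < 1) by (rewrite <- cos_0; apply cos_decreasing_1; lra). lra. }
  exists (Rmin (1/2) (m / 64)). split. { unfold Rmin; destruct Rle_dec; lra. }
  intros b Hb.
  assert (He1 : Rmin (1/2) (m/64) <= 1/2) by apply Rmin_l.
  assert (He2 : Rmin (1/2) (m/64) <= m/64) by apply Rmin_r.
  assert (H0 := D_m1 al Ha). fold m in H0.
  assert (Hr : Rabs (b - -1) <= (cos al - -1) / 2).
  { rewrite Rabs_right; lra. }
  assert (H1 := D_lip al (-1) b Ha ltac:(lra) Hr).
  rewrite (Rabs_right (b - -1)) in H1 by lra. apply Rabs_le_inv in H1.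
  assert (H2 : 4 * al / ((cos al - -1) * (cos al - -1)) <= 4 * al).
  { unfold Rdiv. rewrite <- (Rmult_1_r (4*al)) at 2. apply Rmult_le_compat_l; [lra|].
    rewrite <- Rinv_1. apply Rinv_le_contravar; nra. }
  assert (H3 : 4 * al / ((cos al - -1) * (cos al - -1)) * (b - -1) <= 4 * al * (m/64)).
  { apply Rmult_le_compat; try lra. apply Rmult_le_pos. lra. left; apply Rinv_0_lt_compat; nra. }
  nra.
Qed.

Lemma lip_cont f x0 r L : 0 < r ->
  (forall x, Rabs (x - x0) < r -> Rabs (f x - f x0) <= L * Rabs (x - x0)) -> continuity_pt f x0.
Proof.
  intros Hr H. unfold continuity_pt, continue_in, limit1_in, limit_in. intros eps Heps.
  simpl. unfold R_dist.
  set (L' := Rabs L + 1).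
  assert (HL' : 0 < L') by (unfold L'; pose proof (Rabs_pos L); lra).
  exists (Rmin r (eps / L')). split.
  { unfold Rmin; destruct Rle_dec; [lra|apply Rdiv_lt_0_compat; lra]. }
  intros x [_ Hx].
  assert (Hx1 : Rabs (x - x0) < r) by (eapply Rlt_le_trans; [exact Hx|apply Rmin_l]).
  assert (Hx2 : Rabs (x - x0) < eps / L') by (eapply Rlt_le_trans; [exact Hx|apply Rmin_r]).
  specialize (H x Hx1). eapply Rle_lt_trans; [exact H|].
  assert (L <= Rabs L) by apply RRle_abs.
  assert (0 <= Rabs (x - x0)) by apply Rabs_pos.
  apply Rle_lt_trans with (L' * Rabs (x - x0)). apply Rmult_le_compat_r; unfold L'; lra.
  replace eps with (L' * (eps / L')) by (field; lra).
  apply Rmult_lt_compat_l; auto.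
Qed.

Lemma cos_lip x y : 0 <= x <= PI -> 0 <= y <= PI -> Rabs (cos x - cos y) <= Rabs (x - y).
Proof.
  intros Hx Hy. destruct (total_order_T x y) as [[H|H]|H].
  - assert (H1 := cos_diff x y ltac:(lra) ltac:(lra)).
    rewrite Rabs_right by lra. rewrite Rabs_left by lra. lra.
  - subst. replace (y - y) with 0 by ring. replace (cos y - cos y) with 0 by ring. lra.
  - assert (H1 := cos_diff y x ltac:(lra) ltac:(lra)).
    rewrite Rabs_left by lra. rewrite Rabs_right by lra. lra.
Qed.

Lemma b_range al be : 0 < al <= PI/2 -> al < be < PI -> -1 < cos be < cos al.
Proof.
  intros Ha Hb. assert (HP := PI2_1). split.
  - rewrite <- cos_PI. apply cos_decreasing_1; lra.
  - apply cos_decreasing_1; lra.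
Qed.

Lemma Dcos_cont al be0 : 0 < al <= PI/2 -> al < be0 < PI ->
  continuity_pt (fun be => - Df al (cos be)) be0.
Proof.
  intros Ha Hb. assert (HP := PI2_1). destruct (b_range al be0 Ha Hb) as [Hb1 Hb2].
  set (b0 := cos be0) in *.
  apply (lip_cont _ _ (Rmin (Rmin be0 (PI - be0)) ((cos al - b0)/2))
     (4 * al / ((cos al - b0) * (cos al - b0)))).
  { unfold Rmin; repeat destruct Rle_dec; lra. }
  intros x Hx.
  assert (Hm1 : Rmin (Rmin be0 (PI - be0)) ((cos al - b0)/2) <= Rmin be0 (PI - be0)) by apply Rmin_l.
  assert (Hm2 : Rmin (Rmin be0 (PI - be0)) ((cos al - b0)/2) <= (cos al - b0)/2) by apply Rmin_r.
  assert (Hm3 : Rmin be0 (PI - be0) <= be0) by apply Rmin_l.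
  assert (Hm4 : Rmin be0 (PI - be0) <= PI - be0) by apply Rmin_r.
  apply Rabs_lt_inv in Hx as Hx'.
  assert (Hc := cos_lip x be0 ltac:(lra) ltac:(lra)). fold b0 in Hc.
  assert (Hl := D_lip al b0 (cos x) Ha Hb2 ltac:(lra)).
  cbv beta. rewrite <- Rabs_Ropp.
  replace (- (- Df al (cos x) - - Df al (cos be0))) with (Df al (cos x) - Df al b0) by (unfold b0; ring). eapply Rle_trans; [exact Hl|].
  apply Rmult_le_compat_l; auto.
  apply Rmult_le_pos; [lra|]. left; apply Rinv_0_lt_compat; nra.
Qed.

Definition I1f (al be : R) : R := RI (integrand1 al be) 0 al.
Definition I2f (al be : R) : R := sqrt (cos al - cos be) * Sf al (cos be).

Lemma int1_eq al be t : 0 < al <= PI/2 -> al < be < PI -> 0 <= t <= al ->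
  / sqrt (cos al - cos be) * fA al (cos be) t = integrand1 al be t.
Proof.
  intros Ha Hb Ht. destruct (b_range al be Ha Hb). destruct (x_facts al t Ha Ht).
  assert (0 < sqrt (cos al - cos be)) by (apply sqrt_lt_R0; lra).
  unfold integrand1, fA. rewrite sqrt_div_alt by lra. field. lra.
Qed.

Lemma int1_int al be : 0 < al <= PI/2 -> al < be < PI ->
  Riemann_integrable (integrand1 al be) 0 al.
Proof.
  intros Ha Hb. destruct (b_range al be Ha Hb).
  apply (RiemInt_ext (fun t => / sqrt (cos al - cos be) * fA al (cos be) t)); [lra| |].
  intros; apply int1_eq; auto.
  apply int_scal; [apply fA_int; auto|lra].
Qed.

Lemma K2 al be : 0 < al <= PI/2 -> al < be < PI ->
  sqrt (cos al - cos be) * I1f al be = Af al (cos be).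
Proof.
  intros Ha Hb. destruct (b_range al be Ha Hb).
  assert (0 < sqrt (cos al - cos be)) by (apply sqrt_lt_R0; lra).
  unfold I1f. rewrite <- (RI_ext (fun t => / sqrt (cos al - cos be) * fA al (cos be) t)); [|lra| |].
  - rewrite RI_scal; [|apply fA_int; auto|lra]. unfold Af. field. lra.
  - apply int_scal; [apply fA_int; auto|lra].
  - intros; apply int1_eq; auto.
Qed.

Lemma K3 al be : 0 < al <= PI/2 -> al < be < PI ->
  sqrt (cos al - cos be) * I2f al be = Tf al (cos be).
Proof.
  intros Ha Hb. destruct (b_range al be Ha Hb). unfold I2f, Tf.
  rewrite <- Rmult_assoc, sqrt_sqrt by lra. reflexivity.
Qed.

Lemma I2_imp al be : 0 < al <= PI/2 -> al < be < PI ->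
  improper_int_right (integrand2 al be) 0 al (I2f al be).
Proof.
  intros Ha Hb. destruct (b_range al be Ha Hb). apply ImpL_to.
  apply (ImpL_ext al (fun t => sqrt (cos al - cos be) * kf al (cos be) t)).
  - apply ImpL_scal; [lra|]. apply S_spec; auto.
  - intros t Ht. assert (Hx := x_facts_strict al t Ha Ht).
    assert (0 < sqrt (cos t - cos al)) by (apply sqrt_lt_R0; lra).
    unfold integrand2, kf. rewrite sqrt_div_alt by lra. field. split; lra.
Qed.

Lemma K4 al be : 0 < al <= PI/2 -> al < be < PI ->
  I1f al be - I2f al be = Df al (cos be) / sqrt (cos al - cos be).
Proof.
  intros Ha Hb. destruct (b_range al be Ha Hb).
  assert (0 < sqrt (cos al - cos be)) by (apply sqrt_lt_R0; lra).
  assert (H2 := K2 al be Ha Hb). assert (H3 := K3 al be Ha Hb).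
  unfold Df. rewrite <- H2, <- H3. field. lra.
Qed.

Lemma sign_D al be : 0 < al <= PI/2 -> al < be < PI ->
  (0 < Df al (cos be) <-> I2f al be < I1f al be) /\
  (Df al (cos be) < 0 <-> I1f al be < I2f al be) /\
  (Df al (cos be) = 0 <-> I1f al be = I2f al be).
Proof.
  intros Ha Hb. destruct (b_range al be Ha Hb).
  assert (Hs : 0 < sqrt (cos al - cos be)) by (apply sqrt_lt_R0; lra).
  assert (HK4 := K4 al be Ha Hb).
  assert (E : Df al (cos be) = (I1f al be - I2f al be) * sqrt (cos al - cos be)).
  { rewrite HK4. field. lra. }
  rewrite E. split; [|split]; split; intro; nra.
Qed.

Theorem mainTheorem4 (alpha : R) (Ha : 0 < alpha <= PI / 2) :
  exists I1 I2 : R -> R,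
    (forall beta, alpha < beta < PI ->
       exists pr : Riemann_integrable (integrand1 alpha beta) 0 alpha,
         RiemannInt pr = I1 beta) /\
    (forall beta, alpha < beta < PI ->
       improper_int_right (integrand2 alpha beta) 0 alpha (I2 beta)) /\
    (forall b1 b2, alpha < b1 -> b1 < b2 -> b2 < PI ->
       sqrt (cos alpha - cos b2) * I1 b2 < sqrt (cos alpha - cos b1) * I1 b1) /\
    (forall b1 b2, alpha < b1 -> b1 < b2 -> b2 < PI ->
       sqrt (cos alpha - cos b1) * I2 b1 < sqrt (cos alpha - cos b2) * I2 b2) /\
    (exists delta, 0 < delta /\
       forall beta, alpha < beta < alpha + delta -> beta < PI -> I2 beta < I1 beta) /\
    (exists delta, 0 < delta /\
       forall beta, PI - delta < beta < PI -> alpha < beta -> I1 beta < I2 beta) /\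
    (exists betap, alpha < betap < PI /\ I1 betap = I2 betap /\
       forall beta, alpha < beta < PI -> I1 beta = I2 beta -> beta = betap).
Proof.
  assert (HP := PI2_1).
  exists (I1f alpha), (I2f alpha).
  destruct (D_near_c alpha Ha) as [e0 [He0 HD0]].
  destruct (D_near_m1 alpha Ha) as [e1 [He1 HD1]].
  assert (Hnc : forall be, alpha < be < alpha + e0 -> be < PI -> 0 < Df alpha (cos be)).
  { intros be Hb Hb2. apply HD0. destruct (b_range alpha be Ha ltac:(lra)).
    assert (Hcd := cos_diff alpha be ltac:(lra) ltac:(lra)). lra. }
  assert (Hnm : forall be, PI - e1 < be < PI -> alpha < be -> Df alpha (cos be) < 0).
  { intros be Hb Hb2. apply HD1. destruct (b_range alpha be Ha ltac:(lra)).
    assert (Hcd := cos_diff be PI ltac:(lra) ltac:(lra)). rewrite cos_PI in Hcd. lra. }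
  assert (Hmono : forall b1 b2, alpha < b1 -> b1 < b2 -> b2 < PI ->
     Df alpha (cos b2) < Df alpha (cos b1) /\ cos b2 < cos b1).
  { intros b1 b2 H1 H2 H3. destruct (b_range alpha b1 Ha ltac:(lra)).
    assert (cos b2 < cos b1) by (apply cos_decreasing_1; lra).
    split; auto. apply D_mono; auto. }
  split; [|split; [|split; [|split; [|split; [|split]]]]].
  - intros be Hb. exists (int1_int alpha be Ha Hb). apply RI_eq.
  - intros be Hb. apply I2_imp; auto.
  - intros b1 b2 H1 H2 H3. rewrite !K2 by (auto; lra).
    destruct (b_range alpha b1 Ha ltac:(lra)).
    assert (cos b2 < cos b1) by (apply cos_decreasing_1; lra).
    assert (HA := A_diff alpha (cos b1) (cos b2) Ha ltac:(lra) ltac:(lra)).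
    assert (HQ := Q_pos alpha (cos b1) (cos b2) Ha ltac:(lra) ltac:(lra)). lra.
  - intros b1 b2 H1 H2 H3. rewrite !K3 by (auto; lra).
    destruct (b_range alpha b1 Ha ltac:(lra)).
    assert (cos b2 < cos b1) by (apply cos_decreasing_1; lra).
    assert (HA := T_diff alpha (cos b1) (cos b2) Ha ltac:(lra) ltac:(lra)).
    assert (HQ := Q_pos alpha (cos b1) (cos b2) Ha ltac:(lra) ltac:(lra)). lra.
  - exists e0. split; auto. intros be Hb Hb2.
    apply (sign_D alpha be Ha ltac:(lra)). apply Hnc; auto.
  - exists e1. split; auto. intros be Hb Hb2.
    apply (sign_D alpha be Ha ltac:(lra)). apply Hnm; auto.
  - set (x := alpha + Rmin e0 ((PI - alpha)/2) / 2).
    set (y := PI - Rmin e1 ((PI - alpha)/2) / 2).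
    assert (Hx1 : Rmin e0 ((PI - alpha)/2) <= e0) by apply Rmin_l.
    assert (Hx2 : Rmin e0 ((PI - alpha)/2) <= (PI - alpha)/2) by apply Rmin_r.
    assert (Hx3 : 0 < Rmin e0 ((PI - alpha)/2)) by (unfold Rmin; destruct Rle_dec; lra).
    assert (Hy1 : Rmin e1 ((PI - alpha)/2) <= e1) by apply Rmin_l.
    assert (Hy2 : Rmin e1 ((PI - alpha)/2) <= (PI - alpha)/2) by apply Rmin_r.
    assert (Hy3 : 0 < Rmin e1 ((PI - alpha)/2)) by (unfold Rmin; destruct Rle_dec; lra).
    assert (Hxy : alpha < x < y /\ y < PI) by (unfold x, y; lra).
    destruct (IVT_interv (fun be => - Df alpha (cos be)) x y) as [z [Hz1 Hz2]].
    + intros a Ha'. apply Dcos_cont; auto; lra.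
    + lra.
    + assert (0 < Df alpha (cos x)) by (apply Hnc; unfold x; lra). lra.
    + assert (Df alpha (cos y) < 0) by (apply Hnm; unfold y; lra). lra.
    + exists z. split; [lra|]. split.
      * apply (sign_D alpha z Ha ltac:(lra)). lra.
      * intros be Hb Heq. apply (sign_D alpha be Ha Hb) in Heq.
        destruct (total_order_T be z) as [[Hlt|Heq']|Hgt]; auto.
        -- destruct (Hmono be z ltac:(lra) Hlt ltac:(lra)). lra.
        -- destruct (Hmono z be ltac:(lra) Hgt ltac:(lra)). lra.
Qed.
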